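(* Consider the system $\dot\theta_i=\omega_i-\frac{\kappa}{N}\sum_{j=1}^N(1+\cos\theta_j)\sin\theta_i$, $i=1,\dots,N$. For an equilibrium $\Theta$ let $R=\frac1N\sum_j(1+\cos\theta_j)$. (a) If $\kappa>0$, then any equilibrium whose order parameter $R$ satisfies $NR(1-R)+\frac{\sum_i\omega_i^2}{N\kappa^2R^2}>0$ is linearly unstable; in particular any equilibrium with $0<R<1$ is linearly unstable. (b) If $\kappa<0$, then any equilibrium whose order parameter satisfies $NR(1-R)+\frac{\sum_i\omega_i^2}{N\kappa^2R^2}<0$ is linearly unstable.
   Context: An equilibrium is a point where all right-hand sides vanish; it is linearly unstable if the Jacobian matrix of the vector field at that point has an eigenvalue with positive real part. The conditions implicitly require $R\neq0$. *)

(* Defs.v *)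
From HB Require Import structures.
From mathcomp Require Import all_boot all_order all_algebra.
From mathcomp Require Import all_classical all_reals all_analysis.
From mathcomp Require Import complex.
Set Implicit Arguments. Unset Strict Implicit. Unset Printing Implicit Defensive.
Import Order.TTheory GRing.Theory Num.Theory.
Import numFieldNormedType.Exports.
Local Open Scope ring_scope.

Section Model.
Variables (R : realType) (N : nat) (omega : 'I_N -> R) (kappa : R).

Definition order_param (th : 'rV[R]_N) : R :=
  N%:R^-1 * \sum_(j < N) (1 + cos (th ord0 j)).

Definition vfield (i : 'I_N) (th : 'rV[R]_N) : R :=
  omega i - kappa / N%:R * (\sum_(j < N) (1 + cos (th ord0 j))) * sin (th ord0 i).

Definition is_equilibrium (th : 'rV[R]_N) : Prop :=
  forall i, vfield i th = 0.

Definition jacobian (th : 'rV[R]_N) : 'M[R]_N :=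
  \matrix_(i < N, k < N) 'D_(delta_mx ord0 k) (vfield i) th.

Definition linearly_unstable (th : 'rV[R]_N) : Prop :=
  exists lam : R[i],
    eigenvalue (map_mx (fun x : R => (x%:C)%C) (jacobian th)) lam /\
    0 < complex.Re lam.
End Model.

(* Main.v *)
Require Import Defs.
From HB Require Import structures.
From mathcomp Require Import all_boot all_order all_algebra.
From mathcomp Require Import all_classical all_reals all_analysis.
From mathcomp Require Import complex.
From mathcomp Require Import ring lra.
Import Order.TTheory GRing.Theory Num.Theory.
Local Open Scope ring_scope.

Lemma D_lift (R : realType) (N : nat) (f : 'rV[R]_N -> R) (v a : 'rV[R]_N) :
  'D_v f a = 'D_1 (fun t : R => f (t *: v + a)) 0.
Proof.
rewrite /derive /= scale0r add0r.
f_equal; f_equal; apply: funext => h /=.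
rewrite addr0; congr (_ *: (f (_ *: _ + _) - _)); exact: (esym (mulr1 h)).
Qed.

Lemma is_derive_aff (R : realType) (c b x : R) :
  is_derive x 1 (fun t : R => t * c + b) c.
Proof.
have -> : (fun t : R => t * c + b) = c *: (@id R) + cst b.
  by apply: funext => t /=; rewrite mulrC.
apply: is_derive_eq; rewrite addr0; exact: mulr1.
Qed.

Lemma is_derive_cos_aff (R : realType) (c b : R) :
  is_derive (0:R) (1:R) (fun t : R => 1 + cos (t * c + b)) (- sin b * c).
Proof.
have H := @is_derive1_comp R cos (fun t => t * c + b) 0 (- sin (0 * c + b)) c
   (is_derive_cos _) (is_derive_aff _ c b 0).
have H2 := is_deriveD (is_derive_cst (1:R) (0:R) (1:R)) H.
apply: is_derive_eq H2 _.
by rewrite mul0r add0r add0r.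
Qed.

Lemma is_derive_sin_aff (R : realType) (c b : R) :
  is_derive (0:R) (1:R) (fun t : R => sin (t * c + b)) (cos b * c).
Proof.
have H := @is_derive1_comp R sin (fun t => t * c + b) 0 (cos (0 * c + b)) c
   (is_derive_sin _) (is_derive_aff _ c b 0).
apply: is_derive_eq H _.
by rewrite mul0r add0r.
Qed.

Lemma jac_diag (R : realType) (N : nat) (omega : 'I_N -> R) (kappa : R) (th : 'rV[R]_N) (i : 'I_N) :
  Defs.jacobian omega kappa th i i =
  - (kappa / N%:R) * ((\sum_(j < N) (1 + cos (th ord0 j))) * cos (th ord0 i)
       - sin (th ord0 i) ^+ 2).
Proof.
rewrite /Defs.jacobian mxE D_lift.
pose c := fun j : 'I_N => (delta_mx ord0 i : 'rV[R]_N) ord0 j.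
pose F : R -> R := \sum_(j < N) (fun t : R => 1 + cos (t * c j + th ord0 j)).
pose G := fun t : R => sin (t * c i + th ord0 i).
have -> : (fun t : R => vfield omega kappa i (t *: delta_mx ord0 i + th)) =
   cst (omega i) - (kappa / N%:R) *: (F * G).
  apply: funext => t; rewrite /vfield /F /G /=.
  rewrite fct_sumE -mulrA; congr (_ - _ * (_ * _)).
    by apply: eq_bigr => j _; rewrite /c !mxE.
  by rewrite /c !mxE.
have HF : is_derive (0:R) (1:R) F (\sum_(j < N) (- sin (th ord0 j) * c j)).
  exact: is_derive_sum (fun j => is_derive_cos_aff _ (c j) (th ord0 j)).
have HG := is_derive_sin_aff _ (c i) (th ord0 i).
have H := is_deriveB (is_derive_cst (omega i) (0:R) (1:R))
   (is_deriveZ (kappa / N%:R) (is_deriveM HF HG)).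
have [_ ->] := H.
have ci : c i = 1 by rewrite /c mxE !eqxx.
have cj : forall j, j != i -> c j = 0.
  by move=> j /negPf ji; rewrite /c mxE ji andbF.
have -> : \sum_(j < N) (- sin (th ord0 j) * c j) = - sin (th ord0 i).
  rewrite (bigD1 i) //= ci mulr1 big1 ?addr0 // => j ji.
  by rewrite cj ?mulr0.
rewrite /F /G fct_sumE /= ci.
under eq_bigr do rewrite mul0r add0r.
rewrite mul0r add0r mulr1.
have sE : forall a b : R, a *: b = a * b by [].
rewrite !sE add0r. ring.
Qed.
Lemma sum_Re_pos (R : rcfType) (rs : seq R[i]) :
  0 < complex.Re (\sum_(r <- rs) r) -> exists2 r, r \in rs & 0 < complex.Re r.
Proof.
elim: rs => [|a rs IH]; first by rewrite big_nil ltxx.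
rewrite big_cons.
have -> : complex.Re (a + \sum_(r <- rs) r) = complex.Re a + complex.Re (\sum_(r <- rs) r).
  by case: a; case: (\sum_(r <- rs) r).
move=> H.
have [Ha|Ha] := ltP 0 (complex.Re a).
  by exists a => //; rewrite inE eqxx.
have : 0 < complex.Re (\sum_(r <- rs) r).
  by rewrite -(ltrD2l (complex.Re a)) addr0; apply: le_lt_trans H.
by move/IH => [r rin rp]; exists r => //; rewrite inE rin orbT.
Qed.

Lemma tr_pos_unstable (R : realType) (n : nat) (A : 'M[R]_n) :
  0 < \tr A ->
  exists lam : R[i], eigenvalue (map_mx (fun x : R => (x%:C)%C) A) lam /\ 0 < complex.Re lam.
Proof.
move=> trA.
have n0 : (0 < n)%N.
  by case: n A trA => // A; rewrite /mxtrace big_ord0 ltxx.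
set B := map_mx _ A.
have [rs Hp] := closed_field_poly_normal (char_poly B).
move: Hp; rewrite (monicP (char_poly_monic B)) scale1r => Hp.
have srs : size rs = n.
  have := size_char_poly B; rewrite Hp size_prod_XsubC; by case.
have trB : \tr B = \sum_(r <- rs) r.
  apply: oppr_inj; rewrite -char_poly_trace // Hp -srs coefPn_prod_XsubC //.
  by rewrite srs -lt0n.
have trB' : \tr B = ((\tr A)%:C)%C.
  rewrite /mxtrace.
  rewrite (big_morph (real_complex R) (id1:=0) (op1 := +%R)); last 2 first.
  - by move=> x y; rewrite -rmorphD.
  - by rewrite rmorph0.
  by apply: eq_bigr => i _; rewrite mxE.
have : 0 < complex.Re (\sum_(r <- rs) r) by rewrite -trB trB'.
move=> /sum_Re_pos [r rin rp]; exists r; split => //.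
by rewrite eigenvalue_root_char Hp root_prod_XsubC.
Qed.
Lemma trace_eq (R : realType) (N : nat) (omega : 'I_N -> R) (kappa : R) (th : 'rV[R]_N) :
  (0 < N)%N -> is_equilibrium omega kappa th -> order_param th != 0 -> kappa != 0 ->
  \tr (Defs.jacobian omega kappa th) =
  kappa * (N%:R * order_param th * (1 - order_param th)
    + (\sum_(i < N) omega i ^+ 2) / (N%:R * kappa ^+ 2 * order_param th ^+ 2)).
Proof.
move=> N0 eq R0 k0.
have N0' : (N%:R : R) != 0 by rewrite pnatr_eq0 -lt0n.
rewrite /mxtrace.
under eq_bigr do rewrite jac_diag.
move: R0; rewrite /order_param.
set S := \sum_(j < N) (1 + cos (th ord0 j)).
have hC : \sum_(j < N) cos (th ord0 j) = S - N%:R.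
  rewrite /S big_split /= sumr_const card_ord; ring.
have hom : \sum_(i < N) omega i ^+ 2 = (kappa / N%:R * S) ^+ 2 * \sum_(i < N) sin (th ord0 i) ^+ 2.
  rewrite mulr_sumr; apply: eq_bigr => i _.
  have := eq i; rewrite /vfield -/S => /eqP; rewrite subr_eq0 => /eqP ->.
  by rewrite exprMn.
rewrite hom -mulr_sumr sumrB -mulr_sumr hC.
set s2 := \sum_(i < N) _.
move=> R0.
have S0 : S != 0 by move: R0; rewrite mulf_eq0 negb_or => /andP[].
field.
by rewrite S0 N0' k0.
Qed.

Theorem proposition5p5 (R : realType) (N : nat) (hN : (0 < N)%N)
  (omega : 'I_N -> R) (kappa : R) :
  let Q (th : 'rV[R]_N) :=
    N%:R * order_param th * (1 - order_param th)
    + (\sum_(i < N) omega i ^+ 2) / (N%:R * kappa ^+ 2 * order_param th ^+ 2) in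
  (0 < kappa ->
     (forall th : 'rV[R]_N, is_equilibrium omega kappa th ->
        order_param th != 0 -> 0 < Q th -> linearly_unstable omega kappa th)
     /\
     (forall th : 'rV[R]_N, is_equilibrium omega kappa th ->
        0 < order_param th < 1 -> linearly_unstable omega kappa th))
  /\
  (kappa < 0 ->
     forall th : 'rV[R]_N, is_equilibrium omega kappa th ->
        order_param th != 0 -> Q th < 0 -> linearly_unstable omega kappa th).
Proof.
move=> Q.
have key : forall th, is_equilibrium omega kappa th -> order_param th != 0 ->
    kappa != 0 -> 0 < kappa * Q th -> linearly_unstable omega kappa th.
  move=> th eq R0 k0 pos; apply: tr_pos_unstable.
  by rewrite trace_eq.
have partA : 0 < kappa -> forall th, is_equilibrium omega kappa th ->
    order_param th != 0 -> 0 < Q th -> linearly_unstable omega kappa th.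
  move=> kp th eq R0 Qp; apply: key => //; first by rewrite gt_eqF.
  exact: mulr_gt0.
split.
  move=> kp; split; first exact: partA.
  move=> th eq /andP[R0 R1]; apply: partA => //; first by rewrite gt_eqF.
  rewrite /Q -[X in X < _]addr0; apply: ltr_leD.
    apply: mulr_gt0; first by apply: mulr_gt0 => //; rewrite ltr0n.
    by rewrite subr_gt0.
  apply: divr_ge0; first by apply: sumr_ge0 => i _; exact: sqr_ge0.
  by apply: mulr_ge0; [apply: mulr_ge0 => //; exact: sqr_ge0 | exact: sqr_ge0].
move=> kn th eq R0 Qn; apply: key => //; first by rewrite lt_eqF.
by rewrite nmulr_rgt0.
Qed.
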